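(* Let $s,t\in\mathbb{R}$ with $s\ne0$, $s^2+4t>0$, and let $a,b,u\in\mathbb{C}$. The function $$y(x)=\sum_{n=0}^\infty(a\oplus b)^n_{1,u}\frac{x^n}{\{n\}_{s,t}!}$$ satisfies $y(0)=1$ and $(\mathbf{D}_{s,t}y)(x)=a\,y(x)+b\,y(ux)$ at every $x$ for which the series converges at $x$, $ux$, $\varphi_{s,t}x$ and $\varphi'_{s,t}x$.
   Context: $\varphi_{s,t}=\frac{s+\sqrt{s^2+4t}}{2}$, $\varphi'_{s,t}=\frac{s-\sqrt{s^2+4t}}{2}$. Generalized Fibonacci polynomials: $\{0\}_{s,t}=0$, $\{1\}_{s,t}=1$, $\{n+2\}_{s,t}=s\{n+1\}_{s,t}+t\{n\}_{s,t}$; Fibotorial $\{n\}_{s,t}!=\prod_{k=1}^n\{k\}_{s,t}$, $\{0\}_{s,t}!=1$. $(a\oplus b)^0_{1,u}=1$ and $(a\oplus b)^n_{1,u}=\prod_{i=0}^{n-1}(a+bu^i)$ for $n\ge1$. The $(s,t)$-derivative: $(\mathbf{D}_{s,t}f)(x)=\frac{f(\varphi_{s,t}x)-f(\varphi'_{s,t}x)}{(\varphi_{s,t}-\varphi'_{s,t})x}$ for $x\ne0$, $(\mathbf{D}_{s,t}f)(0)=f'(0)$. *)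

(* Defs.v *)
From Stdlib Require Import Reals ClassicalEpsilon.
From Coquelicot Require Import Coquelicot.
Open Scope R_scope.

(* phi_{s,t} and phi'_{s,t} (real, since s^2+4t>0 in the theorem) *)
Definition phi (s t : R) : R := (s + sqrt (s ^ 2 + 4 * t)) / 2.
Definition phi' (s t : R) : R := (s - sqrt (s ^ 2 + 4 * t)) / 2.

Fixpoint fibp (s t : R) (n : nat) : R :=
  match n with
  | O => 0
  | S m => match m with
           | O => 1
           | S k => s * fibp s t m + t * fibp s t k
           end
  end.

Fixpoint fibotorial (s t : R) (n : nat) : R :=
  match n with
  | O => 1
  | S m => fibotorial s t m * fibp s t (S m)
  end.

Fixpoint qpoch (a b u : C) (n : nat) : C :=
  match n with
  | O => (RtoC 1)
  | S m => (qpoch a b u m * (a + b * Cpow u m))%C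
  end.

Definition yterm (s t : R) (a b u x : C) (n : nat) : C :=
  (qpoch a b u n * Cpow x n / RtoC (fibotorial s t n))%C.

Definition yconv (s t : R) (a b u x : C) : Prop :=
  @ex_series C_AbsRing C_NormedModule (yterm s t a b u x).

(* y(x): the sum of the series where it converges (chosen by classical
   description; unspecified where it diverges) *)
Definition ysum (s t : R) (a b u x : C) : C :=
  epsilon (inhabits (RtoC 0))
    (fun l : C => @is_series C_AbsRing C_NormedModule (yterm s t a b u x) l).

Definition Dst_is (s t : R) (f : C -> C) (x d : C) : Prop :=
  (x <> (RtoC 0) /\
   d = ((f (RtoC (phi s t) * x) - f (RtoC (phi' s t) * x))
        / ((RtoC (phi s t) - RtoC (phi' s t)) * x))%C)
  \/ (x = (RtoC 0) /\ @is_derive C_AbsRing C_NormedModule f x d).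

(* Main.v *)
Require Import Defs.
From Stdlib Require Import Reals Lra Lia Psatz ClassicalEpsilon.
From Coquelicot Require Import Coquelicot.
Open Scope R_scope.

Lemma powS_lt (x y : R) (n : nat) : 0 <= x < y -> x ^ S n < y ^ S n.
Proof.
  intros H; induction n as [|n IH]; simpl in *. lra.
  assert (0 <= x ^ n) by (apply pow_le; lra).
  assert (0 <= x * x ^ n) by nra.
  apply Rle_lt_trans with (x * (y * y ^ n)). apply Rmult_le_compat_l; lra.
  apply Rmult_lt_compat_r; [|lra]. nra.
Qed.

Lemma fib_closed (s t : R) : s ^ 2 + 4 * t > 0 -> forall n,
  fibp s t n * (phi s t - phi' s t) = phi s t ^ n - phi' s t ^ n /\
  fibp s t (S n) * (phi s t - phi' s t) = phi s t ^ S n - phi' s t ^ S n.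
Proof.
  intros H.
  set (D := sqrt (s ^ 2 + 4 * t)).
  assert (HD : D * D = s ^ 2 + 4 * t) by (apply sqrt_sqrt; lra).
  assert (Hs : phi s t + phi' s t = s) by (unfold phi, phi'; fold D; lra).
  assert (Ht : phi s t * phi' s t = - t) by (unfold phi, phi'; fold D; nra).
  set (p := phi s t) in *. set (p' := phi' s t) in *.
  induction n as [|n [IH1 IH2]].
  - simpl. split; ring.
  - split; [exact IH2|].
    change (fibp s t (S (S n))) with (s * fibp s t (S n) + t * fibp s t n).
    replace ((s * fibp s t (S n) + t * fibp s t n) * (p - p'))
      with ((p + p') * (fibp s t (S n) * (p - p')) - (p * p') * (fibp s t n * (p - p'))).
    2:{ rewrite Hs. replace t with (- (p * p')) by lra. ring. }
    rewrite IH1, IH2. simpl. ring.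
Qed.

Lemma phi_diff (s t : R) : s ^ 2 + 4 * t > 0 -> phi s t - phi' s t > 0.
Proof.
  intros H. unfold phi, phi'.
  assert (0 < sqrt (s ^ 2 + 4 * t)) by (apply sqrt_lt_R0; lra). lra.
Qed.

Lemma fib_nz (s t : R) : s <> 0 -> s ^ 2 + 4 * t > 0 -> forall n, fibp s t (S n) <> 0.
Proof.
  intros Hs0 H n E.
  destruct (fib_closed s t H (S n)) as [H1 _].
  pose proof (phi_diff s t H) as Hd.
  rewrite E in H1.
  assert (Hps : phi s t + phi' s t = s) by (unfold phi, phi'; lra).
  set (p := phi s t) in *. set (p' := phi' s t) in *.
  assert (Heq : p ^ S n = p' ^ S n) by lra.
  assert (Ha : Rabs p ^ S n = Rabs p' ^ S n) by (rewrite !RPow_abs, Heq; reflexivity).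
  destruct (Rtotal_order (Rabs p) (Rabs p')) as [Hl|[He|Hl]].
  - pose proof (powS_lt (Rabs p) (Rabs p') n (conj (Rabs_pos _) Hl)). lra.
  - revert He. unfold Rabs; destruct (Rcase_abs p); destruct (Rcase_abs p'); intros; lra.
  - pose proof (powS_lt (Rabs p') (Rabs p) n (conj (Rabs_pos _) Hl)). lra.
Qed.

Lemma fibt_nz (s t : R) : s <> 0 -> s ^ 2 + 4 * t > 0 -> forall n, fibotorial s t n <> 0.
Proof.
  intros Hs H n. induction n as [|n IH]; simpl. lra.
  apply Rmult_integral_contrapositive_currified; auto. apply fib_nz; auto.
Qed.

Lemma series_uniq (f : nat -> C) (l1 l2 : C) :
  @is_series C_AbsRing C_NormedModule f l1 ->
  @is_series C_AbsRing C_NormedModule f l2 -> l1 = l2.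
Proof.
  intros H1 H2. unfold is_series in *.
  exact (filterlim_locally_unique _ _ _ H1 H2).
Qed.

Lemma ysum_spec s t a b u x l :
  @is_series C_AbsRing C_NormedModule (yterm s t a b u x) l -> ysum s t a b u x = l.
Proof.
  intros H. unfold ysum.
  apply (series_uniq (yterm s t a b u x)); auto.
  apply epsilon_spec. exists l; exact H.
Qed.

Lemma ysum_conv s t a b u x :
  yconv s t a b u x -> @is_series C_AbsRing C_NormedModule (yterm s t a b u x) (ysum s t a b u x).
Proof.
  intros [l H]. rewrite (ysum_spec _ _ _ _ _ _ _ H). exact H.
Qed.

Lemma ysum0 s t a b u : ysum s t a b u (RtoC 0) = RtoC 1.
Proof.
  apply ysum_spec.
  unfold is_series.
  apply (filterlim_ext (fun _ => RtoC 1)); [intros n| apply filterlim_const].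
 induction n as [|n IH].
  - rewrite sum_O. unfold yterm. simpl. field.
  - rewrite sum_Sn, <- IH. unfold yterm. simpl.
    match goal with |- _ = plus _ ?X => replace X with (RtoC 0) by (unfold Cdiv; ring) end.
    symmetry; exact (plus_zero_r (RtoC 1)).
Qed.

Lemma RtoC_nz (r : R) : r <> 0 -> RtoC r <> RtoC 0.
Proof. intros H E. apply H. injection E; auto. Qed.

Lemma term_diff s t a b u x n : s <> 0 -> s ^ 2 + 4 * t > 0 ->
  (yterm s t a b u (RtoC (phi s t) * x) (S n) - yterm s t a b u (RtoC (phi' s t) * x) (S n)
   = RtoC (phi s t - phi' s t) * x *
     (a * yterm s t a b u x n + b * yterm s t a b u (u * x) n))%C.
Proof.
  intros Hs H.
  destruct (fib_closed s t H (S n)) as [Hf _].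
  pose proof (fibt_nz s t Hs H n) as HF.
  pose proof (fib_nz s t Hs H n) as HG.
  unfold yterm.
  change (qpoch a b u (S n)) with (qpoch a b u n * (a + b * Cpow u n))%C.
  change (fibotorial s t (S n)) with (fibotorial s t n * fibp s t (S n)).
  rewrite !Cpow_mult_l, <- !RtoC_pow.
  assert (E : phi s t ^ S n = phi' s t ^ S n + fibp s t (S n) * (phi s t - phi' s t)) by lra.
  rewrite E. rewrite RtoC_plus, !RtoC_mult, RtoC_minus.
  change (Cpow x (S n)) with (x * Cpow x n)%C.
  field. split; apply RtoC_nz; auto.
Qed.

Lemma series_shift (f : nat -> C) (L : C) :
  @is_series C_AbsRing C_NormedModule f L ->
  @is_series C_AbsRing C_NormedModule (fun k => f (S k)) (L - f O)%C.
Proof.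
  intros H. apply is_series_incr_1.
  match goal with |- is_series _ ?X => replace X with L; auto end.
  change (L = Cplus (L - f O) (f O)). ring.
Qed.

Lemma series_norm_le (f : nat -> C) (L : C) (g : nat -> R) (G : R) :
  @is_series C_AbsRing C_NormedModule f L -> is_series g G ->
  (forall n, Cmod (f n) <= g n) -> Cmod L <= G.
Proof.
  intros HL HG Hle.
  assert (Hp : forall n, Cmod (@sum_n C_AbelianMonoid f n) <= sum_n g n).
  { induction n as [|n IH].
    - rewrite !sum_O. apply Hle.
    - rewrite !sum_Sn. change (Cmod (Cplus (sum_n f n) (f (S n))) <= sum_n g n + g (S n)).
      eapply Rle_trans. apply Cmod_triangle. specialize (Hle (S n)). lra. }
  assert (H1 : is_lim_seq (fun n => Cmod (@sum_n C_AbelianMonoid f n)) (Finite (Cmod L))).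
  { unfold is_lim_seq. simpl.
    apply (filterlim_comp _ _ _ (sum_n f) (@norm C_AbsRing C_NormedModule) _ (locally L)).
    exact HL. exact (@filterlim_norm C_AbsRing C_NormedModule L). }
  assert (H2 : is_lim_seq (sum_n g) (Finite G)) by exact HG.
  pose proof (is_lim_seq_le _ _ _ _ Hp H1 H2). simpl in H. exact H.
Qed.

Lemma terms_bounded s t a b u z0 : yconv s t a b u z0 ->
  exists M, 0 <= M /\ forall n, Cmod (yterm s t a b u z0 n) <= M.
Proof.
  intros Hc. pose proof (ysum_conv _ _ _ _ _ _ Hc) as H.
  destruct (@filterlim_bounded C_AbsRing C_NormedModule (sum_n (yterm s t a b u z0)))
    as [M0 HM0].
  { exists (ysum s t a b u z0). exact H. }
  assert (HM0' : 0 <= M0).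
  { eapply Rle_trans; [|apply (HM0 O)]. apply norm_ge_0. }
  exists (2 * M0). split. lra.
  intros [|n].
  - pose proof (HM0 O) as h. rewrite sum_O in h. change (Cmod (yterm s t a b u z0 0) <= M0) in h. lra.
  - pose proof (HM0 (S n)) as h1. pose proof (HM0 n) as h2.
    rewrite sum_Sn in h1.
    change (Cmod (Cplus (sum_n (yterm s t a b u z0) n) (yterm s t a b u z0 (S n))) <= M0) in h1.
    change (Cmod (sum_n (yterm s t a b u z0) n) <= M0) in h2.
    set (S0 := sum_n (yterm s t a b u z0) n) in *.
    set (T := yterm s t a b u z0 (S n)) in *.
    replace T with (Cplus (Cplus S0 T) (Copp S0)) by ring.
    eapply Rle_trans. apply Cmod_triangle. rewrite Cmod_opp. lra.
Qed.

Lemma yterm_scale s t a b u r0 z n : 0 < r0 ->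
  Cmod (yterm s t a b u z n) * r0 ^ n = Cmod (yterm s t a b u (RtoC r0) n) * Cmod z ^ n.
Proof.
  intros Hr. unfold yterm, Cdiv. rewrite !Cmod_mult, !Cmod_pow, Cmod_R, Rabs_pos_eq by lra. ring.
Qed.

Lemma yterm0 s t a b u z : yterm s t a b u z O = RtoC 1.
Proof. unfold yterm. simpl. field. Qed.

Lemma tail_bound s t a b u r : r > 0 ->
  (forall z : C, Cmod z < r -> yconv s t a b u z) ->
  exists K rho, 0 < rho /\ 0 <= K /\ forall z, Cmod z < rho ->
    yconv s t a b u z /\
    Cmod (ysum s t a b u z - RtoC 1 - yterm s t a b u z 1) <= K * Cmod z ^ 2.
Proof.
  intros Hr Hc.
  set (r0 := r / 2).
  assert (Hr0 : 0 < r0) by (unfold r0; lra).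
  assert (Hz0 : yconv s t a b u (RtoC r0)).
  { apply Hc. rewrite Cmod_R, Rabs_pos_eq by lra. unfold r0; lra. }
  destruct (terms_bounded _ _ _ _ _ _ Hz0) as [M [HM0 HM]].
  exists (2 * M / r0 ^ 2), (r0 / 2). split; [lra|]. split.
  { apply Rmult_le_pos; [lra|]. apply Rlt_le, Rinv_0_lt_compat, pow_lt; lra. }
  intros z Hz.
  assert (Hcz : yconv s t a b u z) by (apply Hc; unfold r0 in *; lra).
  split; [exact Hcz|].
  pose proof (ysum_conv _ _ _ _ _ _ Hcz) as HY.
  pose proof (series_shift _ _ (series_shift _ _ HY)) as HT.
  simpl in HT. rewrite yterm0 in HT.
  set (q := Cmod z / r0).
  assert (Hq0 : 0 <= q) by (unfold q; apply Rmult_le_pos; [apply Cmod_ge_0| apply Rlt_le, Rinv_0_lt_compat; lra]).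
  assert (Hq1 : q < 1 / 2).
  { unfold q. apply (Rmult_lt_reg_r r0); auto. unfold Rdiv. rewrite Rmult_assoc, Rinv_l by lra. lra. }
  assert (HG : is_series (fun k => (M * q ^ 2) * q ^ k) ((M * q ^ 2) * / (1 - q))).
  { apply (is_series_scal_l (M * q ^ 2) (fun k => q ^ k)). apply is_series_geom.
    rewrite Rabs_pos_eq; lra. }
  pose proof (series_norm_le _ _ _ _ HT HG) as Hb.
  assert (Hterm : forall n, Cmod (yterm s t a b u z n) <= M * q ^ n).
  { intros n. pose proof (yterm_scale s t a b u r0 z n Hr0) as E.
    assert (Hrn : 0 < r0 ^ n) by (apply pow_lt; lra).
    unfold q, Rdiv. rewrite Rpow_mult_distr, pow_inv.
    apply (Rmult_le_reg_r (r0 ^ n)); auto.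
    rewrite E. replace (M * (Cmod z ^ n * / r0 ^ n) * r0 ^ n) with (M * Cmod z ^ n) by (field; lra).
    apply Rmult_le_compat_r. apply pow_le, Cmod_ge_0. apply HM. }
  assert (Hb' : Cmod (ysum s t a b u z - RtoC 1 - yterm s t a b u z 1) <= M * q ^ 2 * / (1 - q)).
  { apply Hb. intros k. eapply Rle_trans. apply Hterm. simpl. nra. }
  eapply Rle_trans. exact Hb'.
  assert (Hzq : Cmod z = q * r0) by (unfold q; field; lra).
  rewrite Hzq.
  assert (0 <= M * q ^ 2) by (apply Rmult_le_pos; [lra| apply pow_le; lra]).
  replace (2 * M / r0 ^ 2 * (q * r0) ^ 2) with (2 * (M * q ^ 2)) by (field; lra).
  apply (Rmult_le_reg_r (1 - q)). lra.
  replace (M * q ^ 2 * / (1 - q) * (1 - q)) with (M * q ^ 2) by (field; lra).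
  nra.
Qed.

Lemma deriv0 s t a b u r : r > 0 ->
  (forall z : C, Cmod z < r -> yconv s t a b u z) ->
  @is_derive C_AbsRing C_NormedModule (ysum s t a b u) (RtoC 0) (a * RtoC 1 + b * RtoC 1)%C.
Proof.
  intros Hr Hc.
  destruct (tail_bound s t a b u r Hr Hc) as [K [rho [Hrho [HK Hb]]]].
  unfold is_derive, filterdiff. split.
  { apply is_linear_scal_l. }
  intros x0 Hx0. pose proof (@is_filter_lim_locally_unique C_AbsRing (AbsRing_NormedModule C_AbsRing) _ _ Hx0) as Hx. subst x0.
  intros eps.
  assert (Hd : 0 < Rmin rho (eps / (K + 1))).
  { apply Rmin_pos; auto. apply Rdiv_lt_0_compat; [apply cond_pos| lra]. }
  apply (filter_imp (fun y => @ball_norm C_AbsRing (AbsRing_NormedModule C_AbsRing) (RtoC 0) (mkposreal _ Hd) y)).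
  2: exact (@locally_ball_norm C_AbsRing (AbsRing_NormedModule C_AbsRing) (RtoC 0) (mkposreal _ Hd)).
  intros y Hy. unfold ball_norm in Hy. simpl in Hy.
  change (Cmod (Cminus (Cminus (ysum s t a b u y) (ysum s t a b u (RtoC 0)))
      (Cmult (Cminus y (RtoC 0)) (a * RtoC 1 + b * RtoC 1)%C)) <= eps * Cmod (Cminus y (RtoC 0))).
  change (Cmod (Cminus y (RtoC 0)) < Rmin rho (eps / (K + 1))) in Hy.
  assert (Hm : forall w : C, Cminus w (RtoC 0) = w) by (intros; ring). rewrite !Hm in *.
  rewrite ysum0.
  assert (Hy1 : Cmod y < rho) by (eapply Rlt_le_trans; [exact Hy| apply Rmin_l]).
  assert (Hy2 : Cmod y < eps / (K + 1)) by (eapply Rlt_le_trans; [exact Hy| apply Rmin_r]).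
  destruct (Hb y Hy1) as [_ Hby].
  assert (E : forall w : C, yterm s t a b u w 1 = (w * (a * RtoC 1 + b * RtoC 1))%C).
  { intros w. unfold yterm. simpl. rewrite Rmult_1_l. field. }
  rewrite E in Hby.
  eapply Rle_trans. exact Hby.
  pose proof (Cmod_ge_0 y) as Hy0.
  assert (K * Cmod y <= eps).
  { assert (K * Cmod y <= (K + 1) * Cmod y) by nra.
    assert ((K + 1) * Cmod y <= eps).
    { apply (Rmult_lt_compat_l (K + 1)) in Hy2; [|lra].
      replace ((K + 1) * (eps / (K + 1))) with (pos eps) in Hy2 by (field; lra). lra. }
    lra. }
  simpl. nra.
Qed.

Theorem mainTheorem13 (s t : R) (a b u : C) :
  s <> 0 -> s ^ 2 + 4 * t > 0 ->
  ysum s t a b u (RtoC 0) = (RtoC 1) /\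
  (forall x : C,
     yconv s t a b u x ->
     yconv s t a b u (u * x)%C ->
     yconv s t a b u (RtoC (phi s t) * x)%C ->
     yconv s t a b u (RtoC (phi' s t) * x)%C ->
     (x = (RtoC 0) -> exists r : R, r > 0 /\
                  forall z : C, Cmod z < r -> yconv s t a b u z) ->
     Dst_is s t (ysum s t a b u) x
       (a * ysum s t a b u x + b * ysum s t a b u (u * x))%C).
Proof.
  intros Hs H. split; [apply ysum0|].
  intros x Hx Hux Hpx Hp'x H0.
  destruct (Ceq_dec x (RtoC 0)) as [Ex|Nx].
  - right. split; auto. subst x.
    destruct (H0 eq_refl) as [r [Hr Hc]].
    rewrite Cmult_0_r, ysum0.
    exact (deriv0 s t a b u r Hr Hc).
  - left. split; auto.
    pose proof (ysum_conv _ _ _ _ _ _ Hx) as HY.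
    pose proof (ysum_conv _ _ _ _ _ _ Hux) as HYu.
    pose proof (ysum_conv _ _ _ _ _ _ Hpx) as HA.
    pose proof (ysum_conv _ _ _ _ _ _ Hp'x) as HB.
    pose proof (series_shift _ _ (is_series_minus _ _ _ _ HA HB)) as HD.
    pose proof (is_series_scal_l (RtoC (phi s t - phi' s t) * x)%C _ _
                  (is_series_plus _ _ _ _ (is_series_scal_l a _ _ HY) (is_series_scal_l b _ _ HYu))) as HR.
    assert (HR' : @is_series C_AbsRing C_NormedModule
      (fun k => plus (yterm s t a b u (RtoC (phi s t) * x) (S k))
                     (opp (yterm s t a b u (RtoC (phi' s t) * x) (S k))))
      (RtoC (phi s t - phi' s t) * x * (a * ysum s t a b u x + b * ysum s t a b u (u * x)))%C).
    { eapply is_series_ext; [|exact HR]. intros k. simpl.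
      symmetry. apply (term_diff s t a b u x k Hs H). }
    pose proof (series_uniq _ _ _ HD HR') as E.
    simpl in E.
    assert (Hd := phi_diff s t H).
    assert (Hnz : RtoC (phi s t - phi' s t) <> RtoC 0) by (apply RtoC_nz; lra).
    rewrite <- RtoC_minus.
    set (A := ysum s t a b u (RtoC (phi s t) * x)) in *.
    set (B := ysum s t a b u (RtoC (phi' s t) * x)) in *.
    change (plus (plus A (opp B)) (opp (plus (yterm s t a b u (RtoC (phi s t) * x) 0) (opp (yterm s t a b u (RtoC (phi' s t) * x) 0))))) with
      (Cplus (Cplus A (Copp B)) (Copp (Cplus (yterm s t a b u (RtoC (phi s t) * x) 0) (Copp (yterm s t a b u (RtoC (phi' s t) * x) 0))))) in E.
    rewrite !yterm0 in E.
    replace (A - B)%C with (RtoC (phi s t - phi' s t) * x * (a * ysum s t a b u x + b * ysum s t a b u (u * x)))%C.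
    + field. split; auto.
    + rewrite <- E. change (Cminus (Cplus A (Copp B)) (Cplus (RtoC 1) (Copp (RtoC 1))) = Cminus A B). ring.
Qed.
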